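(* Let $\alpha\geq2$ be an ordinal. If $\mathfrak A\in TA_\alpha$ is atomic (its Boolean reduct is atomic), then $\mathfrak A$ is completely representable: there are a permutable set $V$ (for infinite $\alpha$, a permutable subset of a weak space) and an injective homomorphism $f:\mathfrak A\to\wp(V)$ such that $f(\prod Y)=\bigcap_{y\in Y}f(y)$ for every $Y\subseteq A$ for which $\prod Y$ exists; moreover $\bigcup_{x\in\mathrm{At}\mathfrak A}f(x)=V$.
   Context: $TA_\alpha=\mathbf{Mod}(\Sigma_\alpha)$, where $\Sigma_\alpha$ (signature $\wedge,-,s_{ij}$ for $i\neq j<\alpha$) consists of the Boolean algebra axioms, the equations saying each $s_{ij}$ is a Boolean endomorphism, and $t_1(x)=t_2(x)$ for all words $t_1,t_2$ in the $s_{ij}$ whose associated compositions of transpositions $[i,j]$ coincide. A weak space is ${}^\alpha U^{(p)}=\{s\in{}^\alpha U:|\{i:s_i\neq p_i\}|<\omega\}$ for a set $U$ and $p\in{}^\alpha U$. A set $V$ of sequences is permutable if $s\circ[i,j]\in V$ for all $s\in V$, $i\neq j<\alpha$. $\wp(V)=\langle\mathcal P(V);\cap,-,S_{ij}\rangle$ with complement relative to $V$ and $S_{ij}(Y)=\{q\in V:q\circ[i,j]\in Y\}$. $\mathrm{At}\mathfrak A$ is the set of atoms. *)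

(* Defs.v *)
From mathcomp Require Import all_boot.
Set Implicit Arguments. Unset Strict Implicit. Unset Printing Implicit Defensive.

Definition transp (I : eqType) (i j : I) (k : I) : I :=
  if k == i then j else if k == j then i else k.

(* A word in the s_ij, written as a list of index pairs:
   [:: (i1,j1); ...; (in,jn)] stands for s_{i1 j1} (... (s_{in jn} x)). *)
Definition word_ok (I : eqType) (w : seq (I * I)) : Prop :=
  forall p, p \in w -> p.1 <> p.2.

Definition eval_word (I : eqType) (A : Type) (s : I -> I -> A -> A)
  (w : seq (I * I)) (x : A) : A :=
  foldr (fun p y => s p.1 p.2 y) x w.

Definition word_perm (I : eqType) (w : seq (I * I)) (k : I) : I :=
  foldr (fun p y => transp p.1 p.2 y) k w.

Definition bjoin (A : Type) (meet : A -> A -> A) (compl : A -> A) (x y : A) : A :=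
  compl (meet (compl x) (compl y)).

Record is_TA (I : eqType) (A : Type) (meet : A -> A -> A) (compl : A -> A)
    (s : I -> I -> A -> A) : Prop := {
  ta_meetC : forall x y, meet x y = meet y x;
  ta_meetA : forall x y z, meet x (meet y z) = meet (meet x y) z;
  ta_joinC : forall x y, bjoin meet compl x y = bjoin meet compl y x;
  ta_joinA : forall x y z, bjoin meet compl x (bjoin meet compl y z)
                          = bjoin meet compl (bjoin meet compl x y) z;
  ta_absorb1 : forall x y, meet x (bjoin meet compl x y) = x;
  ta_absorb2 : forall x y, bjoin meet compl x (meet x y) = x;
  ta_distr : forall x y z, meet x (bjoin meet compl y z)
                          = bjoin meet compl (meet x y) (meet x z);
  ta_bot : forall x y, bjoin meet compl x (meet y (compl y)) = x;
  ta_top : forall x y, meet x (bjoin meet compl y (compl y)) = x;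
  ta_s_meet : forall i j x y, i <> j -> s i j (meet x y) = meet (s i j x) (s i j y);
  ta_s_compl : forall i j x, i <> j -> s i j (compl x) = compl (s i j x);
  ta_words : forall w1 w2 : seq (I * I), word_ok w1 -> word_ok w2 ->
      (forall k, word_perm w1 k = word_perm w2 k) ->
      forall x, eval_word s w1 x = eval_word s w2 x
}.

Definition ble (A : Type) (meet : A -> A -> A) (x y : A) : Prop := meet x y = x.
Definition bzero_of (A : Type) (meet : A -> A -> A) (compl : A -> A) (x : A) : A :=
  meet x (compl x).

Definition is_atom (A : Type) (meet : A -> A -> A) (compl : A -> A) (a : A) : Prop :=
  a <> bzero_of meet compl a /\
  forall y, ble meet y a -> y = bzero_of meet compl a \/ y = a.

Definition is_atomic (A : Type) (meet : A -> A -> A) (compl : A -> A) : Prop :=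
  forall x, x <> bzero_of meet compl x ->
    exists a, is_atom meet compl a /\ ble meet a x.

Definition is_inf (A : Type) (meet : A -> A -> A) (Y : A -> Prop) (b : A) : Prop :=
  (forall y, Y y -> ble meet b y) /\
  (forall c, (forall y, Y y -> ble meet c y) -> ble meet c b).

Definition weak_space (I : eqType) (U : Type) (p : I -> U) (q : I -> U) : Prop :=
  exists l : seq I, forall i, q i <> p i -> i \in l.

Definition permutable (I : eqType) (U : Type) (V : (I -> U) -> Prop) : Prop :=
  forall q i j, i <> j -> V q -> V (fun k => q (transp i j k)).

(* f : A -> P(V) is an injective homomorphism into wp(V)
   (sets are predicates; set equalities are stated pointwise). *)
Definition is_rep_hom (I : eqType) (A : Type) (meet : A -> A -> A) (compl : A -> A)
    (s : I -> I -> A -> A) (U : Type) (V : (I -> U) -> Prop)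
    (f : A -> (I -> U) -> Prop) : Prop :=
  (forall x q, f x q -> V q) /\
  (forall x y q, f (meet x y) q <-> f x q /\ f y q) /\
  (forall x q, f (compl x) q <-> V q /\ ~ f x q) /\
  (forall i j x q, i <> j ->
      (f (s i j x) q <-> V q /\ f x (fun k => q (transp i j k)))) /\
  (forall x y, (forall q, f x q <-> f y q) -> x = y).

(* Main.v *)
Require Import Defs.
From mathcomp Require Import all_boot.
From Stdlib Require Import Classical.

Lemma transpK {I : eqType} (i j k : I) : transp i j (transp i j k) = k.
Proof.
rewrite /transp.
case: (eqVneq k i) => [->|Hki]; first (case: (eqVneq j i) => [->|Hji]).
- by [].
- by rewrite eqxx.
- case: (eqVneq k j) => [->|Hkj]; first by rewrite eqxx.
  by rewrite (negbTE Hki) (negbTE Hkj).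
Qed.

Lemma transp_out {I : eqType} (i j k : I) : k != i -> k != j -> transp i j k = k.
Proof. by rewrite /transp => /negbTE -> /negbTE ->. Qed.

Lemma wp_cat {I : eqType} (w v : seq (I * I)) k :
  word_perm (w ++ v) k = word_perm w (word_perm v k).
Proof. by rewrite /word_perm foldr_cat. Qed.

Lemma ew_cat {I : eqType} (A : Type) (s : I -> I -> A -> A) w v x :
  eval_word s (w ++ v) x = eval_word s w (eval_word s v x).
Proof. by rewrite /eval_word foldr_cat. Qed.

Lemma wp_revl {I : eqType} (w : seq (I * I)) k :
  word_perm (rev w) (word_perm w k) = k.
Proof.
elim: w k => [|p w IH] k //=.
rewrite rev_cons -cats1 wp_cat /= transpK; exact: IH.
Qed.

Lemma wp_revr {I : eqType} (w : seq (I * I)) k :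
  word_perm w (word_perm (rev w) k) = k.
Proof. by rewrite -{1}(revK w) wp_revl. Qed.

Lemma word_ok_rev {I : eqType} (w : seq (I * I)) : word_ok w -> word_ok (rev w).
Proof. by move=> H p; rewrite mem_rev; apply: H. Qed.

Lemma word_ok_cat {I : eqType} (w v : seq (I * I)) :
  word_ok w -> word_ok v -> word_ok (w ++ v).
Proof. by move=> Hw Hv p; rewrite mem_cat => /orP [/Hw|/Hv]. Qed.

Lemma wp_out {I : eqType} (w : seq (I * I)) k :
  k \notin flatten [seq [:: p.1; p.2] | p <- w] -> word_perm w k = k.
Proof.
elim: w => [|p w IH] //=.
rewrite !inE negb_or negb_or => /andP [H1 /andP [H2 H3]].
by rewrite IH // transp_out.
Qed.

Lemma meet_id {I : eqType} {A : Type} {meet : A -> A -> A} {compl : A -> A} {s : I -> I -> A -> A} :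
  is_TA meet compl s -> forall x, meet x x = x.
Proof.
move=> H x. rewrite -{2}(ta_absorb2 H x x). exact: (ta_absorb1 H).
Qed.

Lemma zero_uniq {I : eqType} {A : Type} {meet : A -> A -> A} {compl : A -> A} {s : I -> I -> A -> A} :
  is_TA meet compl s -> forall x y, meet x (compl x) = meet y (compl y).
Proof.
move=> H x y.
rewrite -{1}(ta_bot H (meet x (compl x)) y) (ta_joinC H).
exact: (ta_bot H).
Qed.

Lemma ble_meet {I : eqType} {A : Type} {meet : A -> A -> A} {compl : A -> A} {s : I -> I -> A -> A} :
  is_TA meet compl s -> forall c x y,
  ble meet c (meet x y) <-> ble meet c x /\ ble meet c y.
Proof.
move=> H c x y; rewrite /ble; split.
  move=> E; split.
    by rewrite -E -(ta_meetA H) (ta_meetC H (meet x y)) (ta_meetA H x x) (meet_id H).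
  by rewrite -E -(ta_meetA H) -(ta_meetA H x) (meet_id H).
by case=> E1 E2; rewrite (ta_meetA H) E1 E2.
Qed.

Lemma ble_trans {I : eqType} {A : Type} {meet : A -> A -> A} {compl : A -> A} {s : I -> I -> A -> A} :
  is_TA meet compl s -> forall x y z,
  ble meet x y -> ble meet y z -> ble meet x z.
Proof.
move=> H x y z; rewrite /ble => E1 E2.
by rewrite -E1 -(ta_meetA H) E2.
Qed.

Lemma meet_zero {I : eqType} {A : Type} {meet : A -> A -> A} {compl : A -> A} {s : I -> I -> A -> A} :
  is_TA meet compl s -> forall c y, meet c (meet y (compl y)) = meet y (compl y).
Proof.
move=> H c y.
by rewrite (zero_uniq H y c) (ta_meetA H) (meet_id H).
Qed.

Lemma join_zero {I : eqType} {A : Type} {meet : A -> A -> A} {compl : A -> A} {s : I -> I -> A -> A} :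
  is_TA meet compl s -> forall c y, bjoin meet compl (meet y (compl y)) c = c.
Proof. by move=> H c y; rewrite (ta_joinC H); apply: (ta_bot H). Qed.

Lemma atom_compl {I : eqType} {A : Type} {meet : A -> A -> A} {compl : A -> A} {s : I -> I -> A -> A} :
  is_TA meet compl s -> forall c x, is_atom meet compl c ->
  ble meet c (compl x) <-> ~ ble meet c x.
Proof.
move=> H c x [Hc0 Hc]; split.
  move=> E1 E2.
  have : ble meet c (meet x (compl x)) by apply/(ble_meet H).
  rewrite /ble (meet_zero H) => E; apply: Hc0.
  by rewrite /bzero_of (zero_uniq H c x) E.
move=> Hn.
have Hle : ble meet (meet c x) c.
  by rewrite /ble -(ta_meetA H) (ta_meetC H x c) (ta_meetA H) (meet_id H).
case: (Hc _ Hle) => E; last by exfalso; apply: Hn.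
rewrite /ble -{2}(ta_top H c x) (ta_distr H) E /bzero_of (join_zero H).
by [].
Qed.

Lemma atom_ext {I : eqType} {A : Type} {meet : A -> A -> A} {compl : A -> A} {s : I -> I -> A -> A} :
  is_TA meet compl s -> is_atomic meet compl -> forall x y,
  (forall c, is_atom meet compl c -> (ble meet c x <-> ble meet c y)) -> x = y.
Proof.
move=> H Hat.
suff L : forall x y,
  (forall c, is_atom meet compl c -> (ble meet c x -> ble meet c y)) -> ble meet x y.
  move=> x y E.
  have Hxy : ble meet x y by apply: L => c Hc; case: (E c Hc).
  have Hyx : ble meet y x by apply: L => c Hc; case: (E c Hc).
  by rewrite -Hxy (ta_meetC H) Hyx.
move=> x y E.
have Z : meet x (compl y) = bzero_of meet compl (meet x (compl y)).
  case: (classic (meet x (compl y) = bzero_of meet compl (meet x (compl y)))) => // Hne.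
  exfalso.
  case: (Hat _ Hne) => c [Hc Hcz].
  case/(ble_meet H): Hcz => Hcx Hcy.
  have := E c Hc Hcx.
  by move/(atom_compl H c y Hc): Hcy.
rewrite /ble -{2}(ta_top H x y) (ta_distr H) Z /bzero_of (ta_bot H) //.
Qed.

Lemma s_invol {I : eqType} {A : Type} {meet : A -> A -> A} {compl : A -> A} {s : I -> I -> A -> A} :
  is_TA meet compl s -> forall i j x, i <> j -> s i j (s i j x) = x.
Proof.
move=> H i j x Hij.
have Ok : word_ok [:: (i, j); (i, j)].
  by move=> p; rewrite !inE orbb => /eqP ->.
have Ok0 : word_ok ([::] : seq (I * I)) by [].
have P : forall k, word_perm [:: (i, j); (i, j)] k = word_perm [::] k.
  by move=> k; rewrite /word_perm /= transpK.
exact: (ta_words H Ok Ok0 P x).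
Qed.

Lemma s_atom {I : eqType} {A : Type} {meet : A -> A -> A} {compl : A -> A} {s : I -> I -> A -> A} :
  is_TA meet compl s -> forall i j a, i <> j -> is_atom meet compl a ->
  is_atom meet compl (s i j a).
Proof.
move=> H i j a Hij [Ha0 Ha].
have Sz : forall b, s i j (bzero_of meet compl b) = bzero_of meet compl (s i j b).
  by move=> b; rewrite /bzero_of (ta_s_meet H) // (ta_s_compl H).
split.
  move=> E; apply: Ha0.
  by move: (f_equal (s i j) E); rewrite Sz !(s_invol H i j _ Hij).
move=> y Hy.
have Hy' : ble meet (s i j y) a.
  rewrite /ble in Hy *.
  by rewrite -{1}(s_invol H i j a Hij) -(ta_s_meet H) // Hy.
case: (Ha _ Hy') => E.
  by left; rewrite -(s_invol H i j y Hij) E Sz.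
by right; rewrite -(s_invol H i j y Hij) E.
Qed.

Lemma S_atom {I : eqType} {A : Type} {meet : A -> A -> A} {compl : A -> A} {s : I -> I -> A -> A} :
  is_TA meet compl s -> forall w a, word_ok w -> is_atom meet compl a ->
  is_atom meet compl (eval_word s w a).
Proof.
move=> H; elim=> [|p w IH] a Ok Ha //=.
apply: (s_atom H); first by apply: Ok; rewrite inE eqxx.
apply: IH Ha => q Hq; apply: Ok; by rewrite inE Hq orbT.
Qed.

Definition qf {I : eqType} {A : Type} (i0 : I) (a : A) (w : seq (I * I)) (k : I)
  : (I * option A)%type :=
  (word_perm w k, if word_perm w k == i0 then Some a else None).

Definition Rep {I : eqType} {A : Type} (meet : A -> A -> A) (compl : A -> A) (i0 : I)
  (q : I -> (I * option A)%type) (a : A) (w : seq (I * I)) : Prop :=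
  word_ok w /\ is_atom meet compl a /\ forall k, q k = qf i0 a w k.

Lemma rep_uniq {I : eqType} {A : Type} {meet : A -> A -> A} {compl : A -> A} {s : I -> I -> A -> A} {i0 : I} :
  is_TA meet compl s -> forall {q a w a' w'},
  Rep meet compl i0 q a w -> Rep meet compl i0 q a' w' ->
  eval_word s (rev w) a = eval_word s (rev w') a'.
Proof.
move=> H q a w a' w' [Ok [Ha Hq]] [Ok' [Ha' Hq']].
have E : forall k, qf i0 a w k = qf i0 a' w' k by move=> k; rewrite -Hq -Hq'.
have E1 : forall k, word_perm w k = word_perm w' k.
  by move=> k; move: (E k); rewrite /qf => [[]].
have Eaa : a = a'.
  move: (E (word_perm (rev w) i0)); rewrite /qf -E1 wp_revr eqxx.
  by case.
subst a'.
have P : forall j, word_perm (rev w) j = word_perm (rev w') j.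
  by move=> j; rewrite -{1}(@wp_revr _ w' j) -E1 wp_revl.
exact: (ta_words H (@word_ok_rev _ _ Ok) (@word_ok_rev _ _ Ok') P a).
Qed.

Lemma ble_s {I : eqType} {A : Type} {meet : A -> A -> A} {compl : A -> A} {s : I -> I -> A -> A} :
  is_TA meet compl s -> forall i j c x, i <> j ->
  ble meet c (s i j x) <-> ble meet (s i j c) x.
Proof.
move=> H i j c x Hij; rewrite /ble; split => E.
  by move: (f_equal (s i j) E); rewrite (ta_s_meet H) // (s_invol H i j x Hij).
by move: (f_equal (s i j) E); rewrite (ta_s_meet H) // !(s_invol H i j _ Hij).
Qed.

Definition F {I : eqType} {A : Type} (meet : A -> A -> A) (compl : A -> A)
  (s : I -> I -> A -> A) (i0 : I) (x : A) (q : I -> (I * option A)%type) : Prop :=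
  exists a w, Rep meet compl i0 q a w /\ ble meet (eval_word s (rev w) a) x.

Lemma f_char {I : eqType} {A : Type} {meet : A -> A -> A} {compl : A -> A} {s : I -> I -> A -> A} {i0 : I} :
  is_TA meet compl s -> forall {q a w} x, Rep meet compl i0 q a w ->
  (F meet compl s i0 x q <-> ble meet (eval_word s (rev w) a) x).
Proof.
move=> H q a w x R; split.
  by case=> a' [w' [R' E]]; rewrite (rep_uniq H R R').
by move=> E; exists a, w.
Qed.

Lemma rep_perm {I : eqType} {A : Type} {meet : A -> A -> A} {compl : A -> A} {i0 : I} :
  forall {q a w i j}, i <> j -> Rep meet compl i0 q a w ->
  Rep meet compl i0 (fun k => q (transp i j k)) a (w ++ [:: (i, j)]).
Proof.
move=> q a w i j Hij [Ok [Ha Hq]]; split; last split => //.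
  apply: word_ok_cat Ok _ => p; rewrite inE => /eqP -> //.
by move=> k; rewrite Hq /qf wp_cat.
Qed.

Theorem theorem3p22 (I : eqType) (i0 i1 : I) (Hi : i0 <> i1)
  (A : Type) (meet : A -> A -> A) (compl : A -> A) (s : I -> I -> A -> A) :
  is_TA meet compl s ->
  is_atomic meet compl ->
  exists (U : Type) (p : I -> U) (V : (I -> U) -> Prop) (f : A -> (I -> U) -> Prop),
    (forall q, V q -> weak_space p q) /\
    permutable V /\
    is_rep_hom meet compl s V f /\
    (forall (Y : A -> Prop) (b : A), is_inf meet Y b ->
       forall q, f b q <-> V q /\ (forall y, Y y -> f y q)) /\
    (forall q, V q <-> exists a, is_atom meet compl a /\ f a q).
Proof.
move=> H Hat.
pose V := fun q : I -> (I * option A)%type => exists a w, Rep meet compl i0 q a w.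
have FV : forall x q, F meet compl s i0 x q -> V q.
  by move=> x q [a [w [R _]]]; exists a, w.
have Cat : forall q a w, Rep meet compl i0 q a w -> is_atom meet compl (eval_word s (rev w) a).
  by move=> q a w [Ok [Ha _]]; apply: (S_atom H) => //; apply: word_ok_rev.
exists (I * option A)%type, (fun k => (k, None)), V, (F meet compl s i0).
split.
  move=> q [a [w [Ok [Ha Hq]]]].
  exists (i0 :: flatten [seq [:: p.1; p.2] | p <- w]) => k Hk.
  rewrite inE; case: (eqVneq k i0) => //= Hk0.
  case Hin: (k \in flatten _) => //; exfalso; apply: Hk.
  by rewrite Hq /qf wp_out ?Hin // (negbTE Hk0).
split.
  move=> q i j Hij [a [w R]]; exists a, (w ++ [:: (i, j)]); exact: rep_perm.
split.
  split; first exact: FV.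
  split.
    move=> x y q; split.
      case=> a [w [R E]]; case/(ble_meet H): E => E1 E2.
      by split; exists a, w.
    case=> [[a [w [R E1]]] Hy]; exists a, w; split => //.
    by apply/(ble_meet H); split => //; apply/(f_char H y R).
  split.
    move=> x q; split.
      case=> a [w [R E]]; split; first by exists a, w.
      move=> /(f_char H x R); exact: (proj1 (atom_compl H _ x (Cat _ _ _ R)) E).
    case=> [[a [w R]] Hn]; exists a, w; split => //.
    apply: (proj2 (atom_compl H _ x (Cat _ _ _ R))) => E; apply: Hn; exists a, w; exact: (conj R E).
  split.
    move=> i j x q Hij.
    have Rw : forall w : seq (I * I), rev (w ++ [:: (i, j)]) = (i, j) :: rev w.
      by move=> w; rewrite rev_cat.
    split.
      case=> a [w [R E]]; split; first by exists a, w.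
      exists a, (w ++ [:: (i, j)]); split; first exact: rep_perm.
      by rewrite (Rw w) /=; apply/(ble_s H _ _ _ _ Hij).
    case=> [[a [w R]] Hf]; exists a, w; split => //.
    move/(f_char H x (rep_perm Hij R)): Hf.
    by rewrite (Rw w) /= => /(ble_s H _ _ _ _ Hij).
  move=> x y E; apply: (atom_ext H Hat) => c Hc.
  have R : Rep meet compl i0 (qf i0 c [::]) c [::] by [].
  by rewrite -(f_char H x R) -(f_char H y R).
split.
  move=> Y b [Hb1 Hb2] q; split.
    case=> a [w [R E]]; split; first by exists a, w.
    by move=> y Hy; exists a, w; split => //; apply: (ble_trans H _ _ _ E (Hb1 y Hy)).
  case=> [[a [w R]] HY]; exists a, w; split => //.
  by apply: Hb2 => y Hy; apply/(f_char H y R); apply: HY.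
move=> q; split.
  case=> a [w R]; exists (eval_word s (rev w) a); split; first exact: (Cat _ _ _ R).
  by exists a, w; split => //; apply: (meet_id H).
by case=> a [_ Hf]; apply: (FV _ _ Hf).
Qed.
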